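(* Let $T\in B(\mathcal{F})$ be a block-diagonal operator and let $(A_n)_{n\ge0}$ be its sequence of $\mathcal{C}$-approximants. Then for every $n\ge1$, \[\|A_{n+1}-A_n\|=\|T|_{\mathcal{F}_{n+1}}-(T|_{\mathcal{F}_n})\otimes I\|,\] where $(T|_{\mathcal{F}_n})\otimes I$ acts on $\mathcal{F}_{n+1}=\mathcal{F}_n\otimes\mathbb{C}^d$.
   Context: $d\ge2$; $\xi_1,\ldots,\xi_d$ is the standard orthonormal basis of $\mathbb{C}^d$. $\mathcal{F}=\bigoplus_{n\ge0}\mathcal{F}_n$ is the full Fock space, $\mathcal{F}_0=\mathbb{C}\Omega$, $\mathcal{F}_n=(\mathbb{C}^d)^{\otimes n}$ with the usual inner product. $L_j\eta=\xi_j\otimes\eta$ (and $L_j\Omega=\xi_j$) are the left creation operators. $T$ is block-diagonal if $T(\mathcal{F}_n)\subseteq\mathcal{F}_n$ for all $n$. The $\mathcal{C}$-approximants of $T$ are defined recursively by $A_0=\langle T\Omega,\Omega\rangle I_{\mathcal{F}}$ and, for $n\ge0$, $A_{n+1}=A_n+\sum c_{i_1,\ldots,i_{n+1};j_1,\ldots,j_{n+1}}(L_{i_1}\cdots L_{i_{n+1}})(L_{j_1}\cdots L_{j_{n+1}})^*$, the sum over all $1\le i_1,\ldots,i_{n+1},j_1,\ldots,j_{n+1}\le d$, with $c_{i_1,\ldots,i_{n+1};j_1,\ldots,j_{n+1}}=\langle T(\xi_{j_1}\otimes\cdots\otimes\xi_{j_{n+1}}),\xi_{i_1}\otimes\cdots\otimes\xi_{i_{n+1}}\rangle-\delta_{i_{n+1},j_{n+1}}\langle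 T(\xi_{j_1}\otimes\cdots\otimes\xi_{j_n}),\xi_{i_1}\otimes\cdots\otimes\xi_{i_n}\rangle$ (for $n=0$ the second inner product is $\langle T\Omega,\Omega\rangle$). *)

(* Defs.v *)
From HB Require Import structures.
From mathcomp Require Import all_boot all_order all_algebra.
From mathcomp Require Import all_classical all_reals.
From mathcomp Require Import ereal esum.
From mathcomp Require Import complex.

Set Implicit Arguments.
Unset Strict Implicit.
Unset Printing Implicit Defensive.

Import Order.TTheory GRing.Theory Num.Theory.
Local Open Scope ring_scope.
Local Open Scope classical_set_scope.

(* Full Fock space over C^d, realised as l^2 over words in the alphabet 'I_d:
   the word [:: i1; ...; in] indexes the basis vector xi_{i1} (x) ... (x) xi_{in},
   the empty word indexes the vacuum Omega. *)
Section Fock.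
Variables (R : realType) (d : nat).

Definition word := seq 'I_d.
Definition vec := word -> R[i].

Definition l2sq (x : vec) : \bar R :=
  (\esum_(w in [set: word]) ((Normc.normc (x w)) ^+ 2)%:E)%E.

Definition inF (x : vec) : Prop := (l2sq x < +oo)%E.

Definition l2norm (x : vec) : R := Num.sqrt (fine (l2sq x)).

Definition inFn (n : nat) (x : vec) : Prop := forall w : word, size w != n -> x w = 0.

Definition basis (w : word) : vec := fun u => if u == w then 1 else 0.

Definition bounded_op (T : vec -> vec) : Prop :=
  [/\ forall x, inF x -> inF (T x),
      forall (a : R[i]) (x y : vec), inF x -> inF y ->
        T (fun w => a * x w + y w) = (fun w => a * T x w + T y w)
    & exists M : R, forall x, inF x -> l2norm (T x) <= M * l2norm x].

Definition block_diagonal (T : vec -> vec) : Prop :=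
  forall (n : nat) (x : vec), inF x -> inFn n x -> inFn n (T x).

Definition opnorm (P : set vec) (S : vec -> vec) : \bar R :=
  ereal_sup [set (l2norm (S x))%:E | x in [set x | P x /\ l2norm x <= 1]].

(* left creation operators L_j (L_j eta = xi_j (x) eta) and their adjoints *)
Definition Lop (j : 'I_d) (x : vec) : vec :=
  fun w => match w with
           | j' :: w' => if j' == j then x w' else 0
           | [::] => 0
           end.
Definition Ladj (j : 'I_d) (x : vec) : vec := fun w => x (j :: w).

Definition Lword (s : word) : vec -> vec := foldr (fun j f => Lop j \o f) id s.
Definition Lword_adj (s : word) : vec -> vec := foldr (fun j f => f \o Ladj j) id s.

Definition coef (T : vec -> vec) (n : nat) (I J : n.+1.-tuple 'I_d) : R[i] :=
  T (basis J) I
  - (if tnth I ord_max == tnth J ord_max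
     then T (basis (take n J)) (take n I) else 0).

Fixpoint approx (T : vec -> vec) (n : nat) : vec -> vec :=
  match n with
  | 0 => fun x w => T (basis [::]) [::] * x w
  | m.+1 => fun x w =>
      approx T m x w
      + \sum_(I : m.+1.-tuple 'I_d) \sum_(J : m.+1.-tuple 'I_d)
          coef T I J * Lword I (Lword_adj J x) w
  end.

(* S (x) I on F_{n+1} = F_n (x) C^d, for S acting on F_n, with
   xi_u (x) xi_j identified with xi_{rcons u j} *)
Definition slice (n : nat) (x : vec) (j : 'I_d) : vec :=
  fun w => if size w == n then x (rcons w j) else 0.

Definition tensorI (n : nat) (S : vec -> vec) (x : vec) : vec :=
  fun u => match rev u with
           | j :: r => if size u == n.+1 then S (slice n x j) (rev r) else 0
           | [::] => 0
           end.

End Fock.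

(* Main.v *)
Require Import Defs.
From HB Require Import structures.
From mathcomp Require Import all_boot all_order all_algebra.
From mathcomp Require Import all_classical all_reals.
From mathcomp Require Import ereal esum.
From mathcomp Require Import complex.
Import Order.TTheory GRing.Theory Num.Theory.
Local Open Scope ring_scope.
Local Open Scope classical_set_scope.

Set Implicit Arguments.
Unset Strict Implicit.
Unset Printing Implicit Defensive.

Section Aux.
Variables (R : realType) (d : nat).
Local Notation vec := (vec R d).
Local Notation word := (word d).
Local Notation bas := (@Defs.basis R d).

Definition nsq (z : R[i]) : R := (Normc.normc z ^+ 2)%R.

Lemma nsq_ge0 z : (0 <= nsq z)%R. Proof. exact: sqr_ge0. Qed.
Lemma nsq0 : nsq 0 = 0%R. Proof. by rewrite /nsq Normc.normc0 expr0n. Qed.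

Lemma esum_finT (T : finType) (f : T -> \bar R) : (forall i, (0 <= f i)%E) ->
  \esum_(i in [set: T]) f i = \sum_(i : T) f i.
Proof.
move=> f0; rewrite esum_fset ?finite_finset //.
rewrite (fsbigE (enum T)) ?enum_uniq //.
  by under eq_bigl do rewrite in_setT; rewrite big_enum.
- by move=> i _; rewrite mem_enum.
- exact: finite_finset.
Qed.

Lemma l2sq_fin N (x : vec) : inFn N x ->
  l2sq x = (\sum_(J : N.-tuple 'I_d) nsq (x J))%:E.
Proof.
move=> hx; rewrite /l2sq.
have -> : \esum_(w in [set: word]) ((Normc.normc (x w)) ^+ 2)%:E
   = \esum_(w in [set w : word | size w = N]) (nsq (x w))%:E.
  rewrite [RHS]esum_mkcond; apply: eq_esum => w _.
  case: (boolP (w \in _)) => // /negP; rewrite inE /= => hw.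
  by rewrite hx ?Normc.normc0 ?expr0n //; apply/eqP.
have -> : [set w : word | size w = N] = (@tval N 'I_d) @` [set: N.-tuple 'I_d].
  apply/seteqP; split => w /=.
    by move=> /eqP hw; exists (Tuple hw).
  by case=> J _ <-; rewrite size_tuple.
rewrite esum_image; last by move=> a b _ _; apply: val_inj.
by rewrite esum_finT ?sumEFin // => J; rewrite lee_fin nsq_ge0.
Qed.


Lemma Lword_adjE (J : word) (x : vec) u : Lword_adj J x u = x (J ++ u).
Proof. by elim: J x u => [//|j J IH] x u /=; rewrite IH. Qed.

Lemma LwordE (I : word) (y : vec) w :
  Lword I y w = if take (size I) w == I then y (drop (size I) w) else 0.
Proof.
elim: I w => [|i I IH] w /=; first by rewrite take0 drop0.
case: w => [//|j w] /=.
rewrite /Lop /= IH eqseq_cons.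
by case: (j == i); case: (take _ _ == I).
Qed.

Definition Dop (T : vec -> vec) (n : nat) (x : vec) : vec := fun w =>
  \sum_(I : n.+1.-tuple 'I_d) \sum_(J : n.+1.-tuple 'I_d)
     coef T I J * Lword I (Lword_adj J x) w.

Lemma approxD T n x w : approx T n.+1 x w - approx T n x w = Dop T n x w.
Proof. by rewrite /= addrC addKr. Qed.

Lemma DopE T n x w : Dop T n x w =
  \sum_(I : n.+1.-tuple 'I_d) (if take n.+1 w == I then
     \sum_(J : n.+1.-tuple 'I_d) coef T I J * x (J ++ drop n.+1 w) else 0).
Proof.
apply: eq_bigr => I _.
under eq_bigr do rewrite LwordE size_tuple Lword_adjE.
case: ifP => _ //; by rewrite big1 // => J _; rewrite mulr0.
Qed.

Definition xs n (x : vec) (u : word) : vec :=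
  fun v => if size v == n.+1 then x (v ++ u) else 0.

Lemma Dop_split T n x u (J0 : n.+1.-tuple 'I_d) :
  Dop T n x (J0 ++ u) = Dop T n (xs n x u) J0.
Proof.
rewrite !DopE; apply: eq_bigr => I _.
rewrite take_size_cat ?size_tuple // drop_size_cat ?size_tuple //.
rewrite take_oversize ?size_tuple // drop_oversize ?size_tuple //.
case: ifP => _; last by [].
apply: eq_bigr => J _; congr (_ * _).
by rewrite /xs cats0 size_tuple eqxx.
Qed.

Lemma Dop_short T n x w : (size w < n.+1)%N -> Dop T n x w = 0.
Proof.
move=> hw; rewrite DopE big1 // => I _.
rewrite take_oversize; last exact: ltnW.
case: eqP => [e|_]; last by [].
by move: hw; rewrite e size_tuple ltnn.
Qed.

Lemma Dop_Fn T n y : inFn n.+1 y -> inFn n.+1 (Dop T n y).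
Proof.
move=> hy w hw; case: (ltnP (size w) n.+1) => h; first exact: Dop_short.
rewrite DopE big1 // => I _; case: ifP => _; last by [].
rewrite big1 // => J _; rewrite hy; first by rewrite mulr0.
rewrite size_cat size_tuple size_drop.
have : (n.+1 < size w)%N by rewrite ltn_neqAle eq_sym hw h.
by move=> h2; rewrite subnKC ?(ltnW h2) // neq_ltn h2 orbT.
Qed.

Lemma Dop_lin T n (a : R[i]) y w :
  Dop T n (fun v => a * y v) w = a * Dop T n y w.
Proof.
rewrite !DopE mulr_sumr; apply: eq_bigr => I _.
case: ifP => _; last by rewrite mulr0.
by rewrite mulr_sumr; apply: eq_bigr => J _; rewrite mulrCA.
Qed.


Lemma inFn_inF m (y : vec) : inFn m y -> inF y.
Proof. by move=> h; rewrite /inF (l2sq_fin h) ltry. Qed.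

Lemma basis_Fn m (J : m.-tuple 'I_d) : inFn m (bas J).
Proof.
move=> w hw; rewrite /Defs.basis; case: eqP => [e|_]; last by [].
by move: hw; rewrite e size_tuple eqxx.
Qed.

Lemma expandFn m (x : vec) : inFn m x ->
  x = fun w => \sum_(J : m.-tuple 'I_d) x J * bas J w.
Proof.
move=> hx; apply: funext => w.
case: (boolP (size w == m)) => hw.
  rewrite (bigD1 (Tuple hw)) //= big1.
    by rewrite /Defs.basis eqxx mulr1 addr0.
  move=> J hJ; rewrite /Defs.basis; case: eqP => [e|_]; last by rewrite mulr0.
  by exfalso; move/eqP: hJ; apply; apply: val_inj; rewrite /= e.
rewrite hx // big1 // => J _; rewrite /Defs.basis; case: eqP => [e|_]; last by rewrite mulr0.
by move: hw; rewrite e size_tuple eqxx.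
Qed.

Section Lin.
Variables (T : vec -> vec) (hT : bounded_op T) (hbd : block_diagonal T).

Lemma T0 : T (fun _ => 0) = fun _ => 0.
Proof.
case: hT => _ hlin _.
have h0 : inF (fun _ : word => 0 : R[i]) by apply: (@inFn_inF 0%N).
have := hlin (-1) _ _ h0 h0.
have -> : (fun _ : word => -1 * 0 + 0 : R[i]) = (fun _ => 0).
  by apply: funext => w; rewrite mulr0 addr0.
move=> ->; apply: funext => w; by rewrite mulN1r addNr.
Qed.

Lemma Tsum m (K : Type) (r : seq K) (a : K -> R[i]) (v : K -> vec) :
  (forall k, inFn m (v k)) ->
  T (fun w => \sum_(k <- r) a k * v k w) = fun w => \sum_(k <- r) a k * T (v k) w.
Proof.
move=> hv; case: hT => _ hlin _.
elim: r => [|k r IH].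
  have -> : (fun w => \sum_(k <- [::]) a k * v k w) = (fun _ => 0).
    by apply: funext => w; rewrite big_nil.
  by rewrite T0; apply: funext => w; rewrite big_nil.
have -> : (fun w => \sum_(k0 <- k :: r) a k0 * v k0 w) =
   (fun w => a k * v k w + (fun w => \sum_(k0 <- r) a k0 * v k0 w) w).
  by apply: funext => w; rewrite big_cons.
rewrite hlin; first last.
- apply: (@inFn_inF m) => w hw; rewrite big1 // => k0 _.
  by rewrite hv // mulr0.
- exact: (@inFn_inF m).
by rewrite IH; apply: funext => w; rewrite big_cons.
Qed.

Lemma Texpand m (x : vec) : inFn m x ->
  T x = fun w => \sum_(J : m.-tuple 'I_d) x J * T (bas J) w.
Proof.
move=> hx; rewrite {1}(expandFn hx).
exact: (@Tsum m _ _ _ (fun J : m.-tuple 'I_d => bas J) (@basis_Fn m)).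
Qed.


Lemma ttakeP n (J : n.+1.-tuple 'I_d) : size (take n J) == n.
Proof. by rewrite size_take size_tuple ltnSn. Qed.
Definition ttake n (J : n.+1.-tuple 'I_d) : n.-tuple 'I_d := Tuple (ttakeP J).

Lemma tnth_rcons n (K : n.-tuple 'I_d) k : tnth [tuple of rcons K k] ord_max = k.
Proof. by rewrite (tnth_nth k) /= nth_rcons size_tuple ltnn eqxx. Qed.

Lemma take_rcons' n (K : n.-tuple 'I_d) k : take n (rcons K k) = K.
Proof. by rewrite -cats1 take_size_cat // size_tuple. Qed.

Lemma sum_rcons n (F : n.+1.-tuple 'I_d -> R[i]) :
  \sum_(J : n.+1.-tuple 'I_d) F J =
  \sum_(K : n.-tuple 'I_d) \sum_(k : 'I_d) F [tuple of rcons K k].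
Proof.
rewrite pair_big /=.
rewrite (reindex (fun p : n.-tuple 'I_d * 'I_d => [tuple of rcons p.1 p.2])) /=.
  by [].
exists (fun J => (ttake J, tnth J ord_max)) => [[K k] _ | J _].
  congr pair; last exact: tnth_rcons.
  by apply: val_inj; rewrite /= take_rcons'.
apply: val_inj => /=.
rewrite (tnth_nth (thead J)) /= -take_nth; last by rewrite size_tuple.
by rewrite take_oversize // size_tuple.
Qed.

Lemma tensorI_rcons n S (x : vec) r j : size r = n ->
  tensorI n S x (rcons r j) = S (slice n x j) r.
Proof. by move=> hr; rewrite /tensorI rev_rcons revK size_rcons hr eqxx. Qed.

Lemma tensorI_out n S (x : vec) u : size u != n.+1 -> tensorI n S x u = 0.
Proof. by rewrite /tensorI; case: (rev u) => [//|j r] /negPf ->. Qed.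

Lemma slice_Fn n (x : vec) j : inFn n (slice n x j).
Proof. by rewrite /slice; move=> w /negPf ->. Qed.

Lemma pointwise n (x : vec) w : inFn n.+1 x ->
  T x w - tensorI n T x w = Dop T n x w.
Proof.
move=> hx.
case: (boolP (size w == n.+1)) => hw; last first.
  by rewrite (hbd (inFn_inF hx) hx hw) tensorI_out // (Dop_Fn T hx hw) subr0.
case/lastP: w hw => [|r j] hw; first by [].
have hr : size r = n by move: hw; rewrite size_rcons eqSS => /eqP.
rewrite tensorI_rcons //.
set t0 := Tuple hw.
rewrite DopE (bigD1 t0) //= [X in _ = _ + X]big1; last first.
  move=> I hI; rewrite take_oversize; last by rewrite (eqP hw).
  case: eqP => [e|_]; last by [].
  by exfalso; move/eqP: hI; apply; apply: val_inj.
rewrite addr0 take_oversize ?(eqP hw) // eqxx drop_oversize ?(eqP hw) //.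
have e1 : forall J, coef T t0 J = T (bas J) (rcons r j) -
   (if j == tnth J ord_max then T (bas (take n J)) r else 0).
  move=> J; rewrite /coef; congr (_ - _).
  rewrite (tnth_nth j) /= nth_rcons hr ltnn eqxx.
  by rewrite -cats1 take_size_cat.
under eq_bigr do rewrite e1 cats0.
rewrite (Texpand hx) (Texpand (@slice_Fn n x j)) /=.
have e2 : \sum_(K : n.-tuple 'I_d) slice n x j K * T (bas K) r =
   \sum_(J : n.+1.-tuple 'I_d) (if j == tnth J ord_max then T (bas (take n J)) r else 0) * x J.
  rewrite sum_rcons; apply: eq_bigr => K _.
  rewrite (bigD1 j) //= big1.
    by rewrite tnth_rcons eqxx take_rcons' /slice size_tuple eqxx mulrC addr0.
  by move=> k hk; rewrite tnth_rcons eq_sym (negPf hk) mul0r.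
rewrite e2 -sumrB; apply: eq_bigr => J _.
by rewrite mulrBl mulrC.
Qed.

End Lin.


Lemma opnorm_ext (P : set vec) (S1 S2 : vec -> vec) :
  (forall x, P x -> S1 x = S2 x) -> opnorm P S1 = opnorm P S2.
Proof.
move=> h; rewrite /opnorm; congr ereal_sup; apply/seteqP;
  split => _ [x [hP h1] <-]; exists x => //; by rewrite h.
Qed.

Lemma l2norm_fin m (y : vec) : inFn m y ->
  l2norm y = Num.sqrt (\sum_(J : m.-tuple 'I_d) nsq (y J)).
Proof. by move=> h; rewrite /l2norm (l2sq_fin h). Qed.

Lemma esumZ_le (T0 : choiceType) (P : set T0) (c : R) (f : T0 -> \bar R) :
  (0 <= c)%R -> (forall i, (0 <= f i)%E) ->
  (\esum_(i in P) (c%:E * f i)%E <= c%:E * \esum_(i in P) f i)%E.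
Proof.
move=> c0 f0; apply: ge_ereal_sup => _ [X hX <-].
rewrite -ge0_mule_fsumr //; apply: lee_wpmul2l; first by rewrite lee_fin.
by apply: ereal_sup_ubound; exists X.
Qed.

Lemma esum_split N (f : word -> \bar R) : (forall w, (0 <= f w)%E) ->
  \esum_(w in [set w : word | (N <= size w)%N]) f w =
  \esum_(u in [set: word]) \sum_(J : N.-tuple 'I_d) f (J ++ u).
Proof.
move=> f0.
under [RHS]eq_esum => u _ do
  rewrite -(esum_finT (f := fun J : N.-tuple 'I_d => f (J ++ u)) (fun J => f0 _)).
rewrite esum_esum; last by [].
rewrite -(esum_image _ (fun k : word * N.-tuple 'I_d => tval k.2 ++ k.1) f).
  congr esum; apply/seteqP; split.
    move=> w /= hw.
    have ht : size (take N w) == N by rewrite size_takel.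
    by exists (drop N w, Tuple ht) => //=; rewrite cat_take_drop.
  by move=> _ [[u J] _ <-] /=; rewrite size_cat size_tuple leq_addr.
move=> [u1 J1] [u2 J2] _ _ /= e.
have := eqseq_cat u1 u2 (s1 := J1) (s2 := J2).
rewrite !size_tuple e eqxx => /(_ erefl) /esym /andP[/eqP h1 /eqP h2].
by rewrite h2; congr pair; apply: val_inj.
Qed.

Lemma xs_Fn n (x : vec) u : inFn n.+1 (xs n x u).
Proof. by rewrite /xs; move=> w /negPf ->. Qed.


Lemma nsqM a z : nsq (a * z) = (nsq a * nsq z)%R.
Proof. by rewrite /nsq Normc.normcM exprMn. Qed.

Lemma nsq_eq0 z : nsq z = 0%R -> z = 0.
Proof. by rewrite /nsq => /eqP; rewrite expf_eq0 /= => /eqP /Normc.eq0_normc. Qed.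

Lemma opnorm_ub T n s z : opnorm (@inFn R d n.+1) (Dop T n) = s%:E ->
  inFn n.+1 z -> (l2norm z <= 1)%R -> (l2norm (Dop T n z) <= s)%R.
Proof.
move=> hS hz h1; rewrite -lee_fin -hS; apply: ereal_sup_ubound; by exists z.
Qed.

Lemma zero_Fn m : inFn m (fun _ : word => 0 : R[i]).
Proof. by []. Qed.

Lemma l2norm0 : l2norm (fun _ : word => 0 : R[i]) = 0%R.
Proof.
rewrite (l2norm_fin (@zero_Fn 0%N)) big1 ?sqrtr0 // => J _; exact: nsq0.
Qed.

Lemma claimH T n s : opnorm (@inFn R d n.+1) (Dop T n) = s%:E ->
  forall y, inFn n.+1 y ->
  (\sum_(J : n.+1.-tuple 'I_d) nsq (Dop T n y J) <=
     s ^+ 2 * \sum_(J : n.+1.-tuple 'I_d) nsq (y J))%R.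
Proof.
move=> hS y hy.
set q := (\sum_(J : n.+1.-tuple 'I_d) nsq (y J))%R.
have q0 : (0 <= q)%R by apply: sumr_ge0 => J _; exact: nsq_ge0.
have hs : (0 <= s)%R.
  apply: le_trans (opnorm_ub hS (@zero_Fn _) _); first exact: sqrtr_ge0.
  by rewrite l2norm0.
case: (eqVneq q 0%R) => hq.
  have hy0 : forall J : n.+1.-tuple 'I_d, y J = 0.
    move=> J; apply: nsq_eq0.
    by apply: (psumr_eq0P _ hq) => // i _; exact: nsq_ge0.
  have -> : y = fun w => 0 * y w.
    apply: funext => w; rewrite mul0r.
    case: (boolP (size w == n.+1)) => hw; last exact: hy.
    exact: (hy0 (Tuple hw)).
  rewrite big1 ?hq ?mulr0 // => J _.
  by rewrite Dop_lin mul0r nsq0.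
have qp : (0 < q)%R by rewrite lt_def hq q0.
set c := Num.sqrt q.
have cp : (0 < c)%R by rewrite sqrtr_gt0.
have c2 : (c ^+ 2 = q)%R by rewrite sqr_sqrtr.
set a : R[i] := Complex (c^-1) 0.
have na : nsq a = (c ^+ 2)^-1%R.
  rewrite /nsq /a /Normc.normc /= expr0n addr0 sqr_sqrtr ?sqr_ge0 //.
  by rewrite exprVn.
have hy' : inFn n.+1 (fun w => a * y w).
  by move=> w hw; rewrite hy // mulr0.
set D := (\sum_(J : n.+1.-tuple 'I_d) nsq (Dop T n y J))%R.
have D0 : (0 <= D)%R by apply: sumr_ge0 => J _; exact: nsq_ge0.
have e1 : (\sum_(J : n.+1.-tuple 'I_d) nsq (Dop T n (fun w => a * y w) J) = nsq a * D)%R.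
  by rewrite /D mulr_sumr; apply: eq_bigr => J _; rewrite Dop_lin nsqM.
have e2 : (\sum_(J : n.+1.-tuple 'I_d) nsq (a * y J) = nsq a * q)%R.
  by rewrite /q mulr_sumr; apply: eq_bigr => J _; rewrite nsqM.
have := opnorm_ub hS hy'.
rewrite (l2norm_fin hy') (l2norm_fin (Dop_Fn T hy')) e1 e2.
rewrite na c2 mulVf ?hq // sqrtr1 lexx => /(_ isT).
move=> h.
have h2 : (q^-1 * D <= s ^+ 2)%R.
  have t0 : (0 <= q^-1 * D)%R by rewrite mulr_ge0 // invr_ge0.
  rewrite -(sqr_sqrtr t0) !expr2.
  by apply: ler_pM => //; exact: sqrtr_ge0.
have : (D = q * (q^-1 * D))%R by rewrite mulrA mulfV ?hq // mul1r.
move=> ->; rewrite mulrC; apply: ler_wpM2r => //.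
Qed.

End Aux.

Theorem lemma3p3 (R : realType) (d : nat) (hd : (2 <= d)%N)
  (T : vec R d -> vec R d) (hT : bounded_op T) (hbd : block_diagonal T)
  (n : nat) (hn : (1 <= n)%N) :
  opnorm (@inF R d) (fun x w => approx T n.+1 x w - approx T n x w)
  = opnorm (@inFn R d n.+1) (fun x w => T x w - tensorI n T x w).
Proof.
have eL : (fun x w => approx T n.+1 x w - approx T n x w) = Dop T n.
  by apply: funext => x; apply: funext => w; exact: approxD.
rewrite eL (@opnorm_ext R d _ (fun x w => T x w - tensorI n T x w) (Dop T n));
  last by move=> x hx; apply: funext => w; exact: pointwise.
apply/eqP; rewrite eq_le; apply/andP; split; last first.
  apply: ge_ereal_sup => _ [x [hxN hx1] <-]; apply: ereal_sup_ubound.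
  by exists x => //; split => //; exact: inFn_inF hxN.
set S := opnorm (@inFn R d n.+1) _.
have S0 : (0 <= S)%E.
  apply: le_trans (_ : ((l2norm (Dop T n (fun _ => 0)))%:E <= S)%E).
    by rewrite lee_fin sqrtr_ge0.
  apply: ereal_sup_ubound; exists (fun _ => 0) => //; split.
    exact: zero_Fn.
  by rewrite l2norm0.
case E: S S0 => [s| |] S0; [| by rewrite leey | by []].
have hs : (0 <= s)%R by rewrite -lee_fin.
have H := claimH E.
apply: ge_ereal_sup => _ [x [hxF hx1] <-].
have fx0 : (0 <= l2sq x)%E by apply: esum_ge0 => w _; rewrite lee_fin sqr_ge0.
have key : (l2sq (Dop T n x) <= (s ^+ 2)%:E * l2sq x)%E.
  rewrite /l2sq.
  have -> : \esum_(w in [set: word d]) ((Normc.normc (Dop T n x w)) ^+ 2)%:E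
     = \esum_(w in [set w : word d | (n.+1 <= size w)%N]) (nsq (Dop T n x w))%:E.
    rewrite [RHS]esum_mkcond; apply: eq_esum => w _.
    case: (boolP (w \in _)) => // /negP; rewrite inE /= => hw.
    rewrite Dop_short; last by rewrite ltnNge; apply/negP.
    by rewrite Normc.normc0 expr0n.
  rewrite esum_split; last by move=> w; rewrite lee_fin nsq_ge0.
  under eq_esum do under eq_bigr do rewrite Dop_split.
  apply: le_trans (_ : (\esum_(u in [set: word d])
      ((s ^+ 2)%:E * \sum_(J : n.+1.-tuple 'I_d) (nsq (x (J ++ u)))%:E) <= _)%E).
    apply: le_esum => u _; rewrite !sumEFin -EFinM lee_fin.
    apply: le_trans (H _ (@xs_Fn _ _ n x u)) _; rewrite le_eqVlt; apply/orP; left.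
    apply/eqP; congr (_ * _); apply: eq_bigr => J _.
    by rewrite /xs size_tuple eqxx.
  apply: le_trans (esumZ_le _ _ _) _.
  - by rewrite sqr_ge0.
  - by move=> u; apply: sume_ge0 => J _; rewrite lee_fin nsq_ge0.
  rewrite -(@esum_split R d n.+1 (fun w => (nsq (x w))%:E)); last by move=> w; rewrite lee_fin nsq_ge0.
  apply: lee_wpmul2l; first by rewrite lee_fin sqr_ge0.
  rewrite [leLHS]esum_mkcond; apply: le_esum => w _.
  by case: ifP => _ //; rewrite lee_fin sqr_ge0.
move: hxF hx1; rewrite /inF /l2norm.
case Ex: (l2sq x) fx0 key => [r| |] fx0 key; [| by rewrite ltxx | by []].
move=> _ /= hr1.
have r0 : (0 <= r)%R by rewrite -lee_fin.
have r1 : (r <= 1)%R.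
  have h := hr1; rewrite -(sqr_sqrtr r0) expr2.
  have := sqrtr_ge0 r; move=> q0.
  by rewrite -(mulr1 1); apply: ler_pM.
have D0 : (0 <= l2sq (Dop T n x))%E.
  by apply: esum_ge0 => w _; rewrite lee_fin sqr_ge0.
case ED: (l2sq (Dop T n x)) D0 key => [t| |] D0 key;
  [| by move: key; rewrite -EFinM leye_eq | by []].
rewrite lee_fin /=.
have t0 : (0 <= t)%R by rewrite -lee_fin.
have ts : (t <= s ^+ 2)%R.
  rewrite -EFinM lee_fin in key; apply: le_trans key _.
  by rewrite -{2}(mulr1 (s ^+ 2)); apply: ler_wpM2l; rewrite ?sqr_ge0.
by rewrite -(ger0_norm hs) -sqrtr_sqr ler_sqrt // sqr_ge0.
Qed.
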